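(* Let $D$ be a knot diagram. Then there exist at least four mutually distinct sets of regions of $D$ that are ineffective for $D$.
   Context: A link diagram is a regular projection of a link into the plane with over/under information at each double point (crossing); a knot diagram is a diagram of a link with one component. The regions of a diagram are the connected components of the complement in the plane of the projection. A crossing touches a region $R$ if it lies on the boundary of $R$. A region crossing change at a region $R$ is the local move changing (switching over and under at) each crossing touching $R$, each such crossing being changed exactly once. For a set $\mathcal{R}=\{R,R',\dots,R''\}$ of mutually distinct regions, ''region crossing changes about $\mathcal{R}$'' means applying the region crossing change at each region of $\mathcal{R}$ once (the order does not matter); about $\emptyset$ means doing nothing. Thus a crossing is changed in the end iff it touches an odd number of regions of $\mathcal{R}$. A set $\mathcal{R}^{\ast}$ of regions of a diagram is ineffective if region crossing changes about $\mathcal{R}^{\ast}$ do not change the diagram in consequence. *)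

(* Defs.v *)
From mathcomp Require Import all_boot all_order.
Set Implicit Arguments. Unset Strict Implicit. Unset Printing Implicit Defensive.

(* A link diagram, encoded combinatorially as a 4-valent plane map
   (darts, vertex rotation [rot], edge involution [edge]) together with
   the crossings (vertices = rot-orbits), the regions (faces = orbits of
   rot \o edge) and the over/under information at each crossing. *)
Record diagram := Diagram {
  dart : finType;
  crossing : finType;
  region : finType;
  rot : dart -> dart;
  edge : dart -> dart;
  vert : dart -> crossing;
  face : dart -> region;     (* the region lying at the corner following a dart *)
  over : crossing -> bool
}.

Definition face_step (D : diagram) (d : dart D) : dart D := @rot D (@edge D d).

(* straight-ahead step along the curve: cross the edge, then go to the
   opposite dart at the next crossing *)
Definition straight (D : diagram) (d : dart D) : dart D :=
  @rot D (@rot D (@edge D d)).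

(* Conditions making D a knot diagram (regular projection of one circle,
   connected plane 4-valent map with transversal double points), or the
   crossingless diagram of a circle (no crossings, two regions). *)
Definition is_knot_diagram (D : diagram) : Prop :=
  (#|dart D| = 0 /\ #|crossing D| = 0 /\ #|region D| = 2)
  \/
  [/\ [/\ injective (@rot D),
          (forall d, @edge D (@edge D d) = d),
          (forall d, @edge D d != d)
        & (forall d, order (@rot D) d = 4)],
      [/\ (forall d1 d2, @vert D d1 = @vert D d2 <-> fconnect (@rot D) d1 d2),
          (forall d1 d2, @face D d1 = @face D d2 <-> fconnect (@face_step D) d1 d2),
          (forall c, exists d, @vert D d = c)
        & (forall r, exists d, @face D d = r)],
      (forall d1 d2, connect (fun x y => (y == @rot D x) || (y == @edge D x)) d1 d2),
      (* Euler formula V - E + F = 2 : the map is planar (spherical) *)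
      #|crossing D| + #|region D| = (#|dart D|)./2 + 2
    & (* one component: the straight-ahead walk has exactly two orbits
         (the single component traversed in its two directions) *)
      fcard (@straight D) (dart D) = 2 ].

Definition touches (D : diagram) (c : crossing D) (r : region D) : bool :=
  [exists d, (@vert D d == c) && (@face D d == r)].

Definition rcc (D : diagram) (S : {set region D}) : crossing D -> bool :=
  fun c => @over D c (+) odd #|[set r in S | touches c r]|.

(* S is ineffective: the region crossing changes about S leave the diagram
   unchanged (only the over/under information can change). *)
Definition ineffective (D : diagram) (S : {set region D}) : Prop :=
  rcc S = @over D.

(* Main.v *)
Require Import Defs.
From mathcomp Require Import all_boot.
From Stdlib Require Import FunctionalExtensionality.
From mathcomp Require Import zify.
Set Implicit Arguments. Unset Strict Implicit. Unset Printing Implicit Defensive.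

Section S.
Variable D : diagram.

Definition sd (A B : {set region D}) := (A :\: B) :|: (B :\: A).

Definition F (S : {set region D}) : {ffun crossing D -> bool} :=
  [ffun c => odd #|[set r in S | touches c r]|].

Lemma odd_sd (A B : {set region D}) :
  odd #|sd A B| = odd #|A| (+) odd #|B|.
Proof.
rewrite /sd cardsU.
have -> : (A :\: B) :&: (B :\: A) = set0.
  by apply/setP=> x; rewrite !inE; case: (x \in A); case: (x \in B).
rewrite cards0 subn0 !cardsD.
have h1 := subset_leq_card (subsetIl A B).
have h2 := subset_leq_card (subsetIr A B).
rewrite [B :&: A]setIC oddD !oddB //.
by case: (odd #|A|); case: (odd #|B|); case: (odd #|A :&: B|).
Qed.

Lemma F_sd A B c : F (sd A B) c = F A c (+) F B c.
Proof.
rewrite !ffunE -odd_sd; apply: congr1; apply: eq_card => x.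
rewrite /sd !inE.
by case: (x \in A); case: (x \in B); case: touches.
Qed.

Lemma sdK A B : sd A (sd A B) = B.
Proof.
apply/setP=> x; rewrite /sd !inE.
by case: (x \in A); case: (x \in B).
Qed.

Lemma ker_ineff S : F S = [ffun => false] -> ineffective S.
Proof.
move=> h; rewrite /ineffective; apply: functional_extensionality => c.
have := congr1 (fun f : {ffun crossing D -> bool} => f c) h; rewrite /= !ffunE /rcc => ->.
by rewrite addbF.
Qed.

Lemma big_fiber : 3 * 2 ^ #|crossing D| < 2 ^ #|region D| ->
  exists y, 3 < #|[set S | F S == y]|.
Proof.
move=> h.
case: (boolP [exists y, 3 < #|[set S | F S == y]|]) => [/existsP //|].
rewrite negb_exists => /forallP hf; exfalso.
have e : #|{set region D}| = \sum_(y : {ffun crossing D -> bool}) #|[set S | F S == y]|.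
  rewrite -sum1_card (partition_big F xpredT) //=.
  by apply: eq_bigr => y _; rewrite -sum1_card; apply: eq_bigl => S; rewrite inE.
have : #|{set region D}| <= \sum_(y : {ffun crossing D -> bool}) 3.
  by rewrite e; apply: leq_sum => y _; have := hf y; rewrite -leqNgt.
have -> : #|{set region D}| = 2 ^ #|region D|.
  by rewrite -cardsT -card_powerset powersetT cardsT.
rewrite sum_nat_const card_ffun card_bool.
by rewrite mulnC leqNgt h.
Qed.

Lemma count_regions : is_knot_diagram D -> #|crossing D| + 2 <= #|region D|.
Proof.
case=> [[_ [-> ->]] // | [[_ _ _ hord] [hv _ hc _] _ heul _]].
have h4 : 4 * #|crossing D| <= #|dart D|.
  have e : #|dart D| = \sum_(c : crossing D) #|[set d | vert d == c]|.
    rewrite -sum1_card (partition_big (@vert D) xpredT) //=.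
    by apply: eq_bigr => y _; rewrite -sum1_card; apply: eq_bigl => S; rewrite inE.
  rewrite e mulnC -sum_nat_const; apply: leq_sum => c _.
  have [d hd] := hc c.
  rewrite -(hord d); apply: subset_leq_card; apply/subsetP => x hx.
  rewrite inE -hd; apply/eqP; apply: esym; apply/hv; exact: hx.
have : (4 * #|crossing D|)./2 <= (#|dart D|)./2 by apply: half_leq.
have -> : 4 * #|crossing D| = (2 * #|crossing D|).*2 by rewrite -mul2n mulnA.
rewrite doubleK.
move: heul; move: (#|dart D|./2) => h; lia.
Qed.

End S.

Theorem lemma2p4 (D : diagram) :
  is_knot_diagram D ->
  exists S1 S2 S3 S4 : {set region D},
    [/\ ineffective S1, ineffective S2, ineffective S3 & ineffective S4] /\
    uniq [:: S1; S2; S3; S4].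
Proof.
move=> hk.
have hR := count_regions hk.
have h : 3 * 2 ^ #|crossing D| < 2 ^ #|region D|.
  apply: (@leq_trans (2 ^ (#|crossing D| + 2))); last exact: leq_pexp2l.
  by rewrite expnD mulnC ltn_pmul2l // expn_gt0.
have [y hy] := big_fiber h.
have hu := enum_uniq (mem [set S | F S == y]).
have hin : forall x, x \in enum (mem [set S | F S == y]) -> F x = y.
  by move=> x; rewrite mem_enum inE => /eqP.
rewrite cardE in hy.
move: hu hin hy; case: (enum _) => [|a [|b [|c [|d t]]]] //= hu hin _.
have Fsd : forall x, F x = y -> ineffective (sd a x).
  move=> x hx; apply: ker_ineff; apply/ffunP => z.
  rewrite F_sd hx (hin a) ?inE ?eqxx // !ffunE.
  by case: (y z).
exists (sd a a), (sd a b), (sd a c), (sd a d); split.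
  split; apply: Fsd; apply: hin; rewrite !inE eqxx ?orbT //.
change (uniq (map (sd a) [:: a; b; c; d])).

rewrite map_inj_uniq; last exact: can_inj (@sdK D a).
move: hu => /= /and5P [ha hb hc hd _] /=; rewrite !inE in ha hb hc *; move: ha hb hc hd; rewrite !negb_or; case/and4P=> -> -> -> _; case/and3P=> -> -> _; case/andP=> -> _ _ /=. done.
Qed.
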